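(* Let $I$ be a set, $\mathcal{E}=(E_i)_{i\in I}$ a family of nonempty sets, and $R$ a multiple relation in $\mathcal{E}$. Then the set $\mathcal{K}_R$ of subsets of $J_R$ that are not scindable for $R$ is an integral connective structure on $J_R$.
   Context: For $J\subseteq I$ let $Z_J=\prod_{j\in J}E_j$ ($J$-families; $Z_\emptyset=\{\bullet\}$). A multiple relation is a pair $R=(J_R,G_R)$ with $J_R\subseteq I$ and $G_R\subseteq Z_{J_R}$. For $K\subseteq J_R$, $R_{|K}=(K,\{x_{|K}:x\in G_R\})$. Product: $R\bowtie S=(J_R\cup J_S,\{x\in Z_{J_R\cup J_S}: x_{|J_R}\in G_R,\ x_{|J_S}\in G_S\})$. A bipartition of $J$ is a pair $(K,L)$ of nonempty disjoint subsets with union $J$. A relation $T$ is scindable if for some bipartition $(K,L)$ of $J_T$ there are relations $R,S$ with domains $K,L$ and $T=R\bowtie S$; a subset $J\subseteq J_R$ is scindable for $R$ if $R_{|J}$ is scindable. A connective structure on $X$ is a set $\mathcal{K}$ of subsets of $X$ such that for every $\mathcal{I}\subseteq\mathcal{K}$ with $\bigcap_{K\in\mathcal{I}}K\neq\emptyset$, $\bigcup_{K\in\mathcal{I}}K\in\mathcal{K}$; it is integral if it contains all singletons. *)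

(* Defs.v *)
Section MultipleRelations.
Context {I : Type} (E : I -> Type).

Definition family (J : I -> Prop) : Type := forall j : {i : I | J i}, E (proj1_sig j).

(* A multiple relation R = (J_R, G_R) with G_R a subset of Z_{J_R}. *)
Record mrel : Type := MRel {
  mdom : I -> Prop;
  mgraph : family mdom -> Prop }.

Definition subset (A B : I -> Prop) : Prop := forall i, A i -> B i.

Definition restr_fam (J K : I -> Prop) (H : subset K J) (x : family J) : family K :=
  fun j => x (exist _ (proj1_sig j) (H _ (proj2_sig j))).

Definition restr (R : mrel) (K : I -> Prop) (H : subset K (mdom R)) : mrel :=
  @MRel K (fun y => exists x, mgraph R x /\ @restr_fam (mdom R) K H x = y).

Definition union (A B : I -> Prop) : I -> Prop := fun i => A i \/ B i.

Lemma subset_unionl (A B : I -> Prop) : subset A (union A B).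
Proof. intros i h; left; exact h. Qed.
Lemma subset_unionr (A B : I -> Prop) : subset B (union A B).
Proof. intros i h; right; exact h. Qed.

Definition join (R S : mrel) : mrel :=
  @MRel (union (mdom R) (mdom S))
    (fun x => mgraph R (@restr_fam _ _ (@subset_unionl (mdom R) (mdom S)) x)
           /\ mgraph S (@restr_fam _ _ (@subset_unionr (mdom R) (mdom S)) x)).

Definition bipartition (J K L : I -> Prop) : Prop :=
  (exists i, K i) /\ (exists i, L i) /\ (forall i, ~ (K i /\ L i)) /\
  (forall i, J i <-> K i \/ L i).

Definition scindable (T : mrel) : Prop :=
  exists R S : mrel, bipartition (mdom T) (mdom R) (mdom S) /\ T = join R S.

Definition not_scindable_subsets (R : mrel) : (I -> Prop) -> Prop :=
  fun J => exists H : subset J (mdom R), ~ scindable (@restr R J H).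

End MultipleRelations.

Definition connective_structure {X0 : Type} (X : X0 -> Prop)
  (K : (X0 -> Prop) -> Prop) : Prop :=
  (forall A, K A -> subset A X) /\
  (forall F : (X0 -> Prop) -> Prop,
      (forall A, F A -> K A) ->
      (exists x, X x /\ forall A, F A -> A x) ->
      K (fun x => exists A, F A /\ A x)).

Definition integral_connective_structure {X0 : Type} (X : X0 -> Prop)
  (K : (X0 -> Prop) -> Prop) : Prop :=
  connective_structure X K /\ (forall x, X x -> K (fun y => y = x)).

(* Main.v *)
Require Import Defs.
From Stdlib Require Import FunctionalExtensionality PropExtensionality ProofIrrelevance ClassicalEpsilon.

Arguments mdom {I E}. Arguments mgraph {I E}. Arguments restr {I E} R {K} H.
Arguments restr_fam {I E J K} H x j. Arguments join {I E}. Arguments scindable {I E}.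

Section Aux.
Context {I : Type} (E : I -> Type).

Lemma fam_eq (J : I -> Prop) (x y : family E J) :
  (forall i h, x (exist _ i h) = y (exist _ i h)) -> x = y.
Proof. intro H. apply functional_extensionality_dep. intros [i h]. apply H. Qed.

Lemma fam_pi (J : I -> Prop) (x : family E J) i p q :
  x (exist _ i p) = x (exist _ i q).
Proof. rewrite (proof_irrelevance _ p q). reflexivity. Qed.

Lemma mrel_eq_graph (M N : mrel E) (e : M = N) (x : family E (mdom M))
  (y : family E (mdom N)) :
  (forall i h1 h2, x (exist _ i h1) = y (exist _ i h2)) ->
  (mgraph M x <-> mgraph N y).
Proof.
  intro H. subst N. replace y with x; [tauto|]. apply fam_eq. intros; apply H.
Qed.

Lemma mrel_ext (M N : mrel E) :
  (forall i, mdom M i <-> mdom N i) ->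
  (forall (x : family E (mdom M)) (y : family E (mdom N)),
      (forall i h1 h2, x (exist _ i h1) = y (exist _ i h2)) ->
      (mgraph M x <-> mgraph N y)) -> M = N.
Proof.
  destruct M as [D G], N as [D' G']; simpl; intros H1 H2.
  assert (D = D') by (apply functional_extensionality; intro i;
                      apply propositional_extensionality; apply H1).
  subst D'. f_equal. apply functional_extensionality; intro x.
  apply propositional_extensionality. apply H2. intros. apply fam_pi.
Qed.

Lemma key (R : mrel E) (U : I -> Prop) (HU : subset U (mdom R)) (S T : mrel E) :
  restr R HU = join S T -> bipartition U (mdom S) (mdom T) ->
  forall (A : I -> Prop) (HA0 : subset A U) (HA : subset A (mdom R)),
  (exists i, A i /\ mdom S i) -> (exists i, A i /\ mdom T i) ->
  scindable (restr R HA).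
Proof.
  intros e [_ [_ [disj cov]]] A HA0 HA [k hk] [l hl].
  assert (sK : subset (fun i => A i /\ mdom S i) (mdom S)) by (intros i [_ h]; exact h).
  assert (sL : subset (fun i => A i /\ mdom T i) (mdom T)) by (intros i [_ h]; exact h).
  exists (restr S sK), (restr T sL). split.
  { split; [exists k; exact hk|]. split; [exists l; exact hl|]. split.
    - simpl. intros i [[_ a] [_ b]]. exact (disj i (conj a b)).
    - simpl. intro i. split.
      + intro a. destruct (proj1 (cov i) (HA0 i a)); tauto.
      + tauto. }
  assert (UKL : forall i, union (mdom S) (mdom T) i -> U i) by (intros i h; apply cov; exact h).
  assert (KLU : forall i, U i -> union (mdom S) (mdom T) i) by (intros i h; apply cov; exact h).
  apply mrel_ext.
  { simpl. intro i. split.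
    - intro a. unfold union. destruct (proj1 (cov i) (HA0 i a)); tauto.
    - unfold union; tauto. }
  simpl. intros x y Hxy. split.
  - intros [r [Hr Hrx]].
    assert (G : mgraph (join S T) (fun j => r (exist _ (proj1_sig j) (HU _ (UKL _ (proj2_sig j)))))).
    { apply (proj1 (mrel_eq_graph _ _ e (restr_fam HU r) _ (fun i h1 h2 => fam_pi _ _ _ _ _))).
      exists r. split; [exact Hr| reflexivity]. }
    destruct G as [GS GT]. split.
    + eexists. split; [exact GS|]. apply fam_eq. intros i [a h].
      unfold restr_fam; simpl. rewrite <- Hxy with (h1 := a).
      rewrite <- Hrx. unfold restr_fam; simpl. apply fam_pi.
    + eexists. split; [exact GT|]. apply fam_eq. intros i [a h].
      unfold restr_fam; simpl. rewrite <- Hxy with (h1 := a).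
      rewrite <- Hrx. unfold restr_fam; simpl. apply fam_pi.
  - intros [[s [Hs Hsy]] [t [Ht Hty]]].
    assert (P1 : forall i, A i -> union (mdom S) (mdom T) i ->
              union (fun i => A i /\ mdom S i) (fun i => A i /\ mdom T i) i)
      by (unfold union; tauto).
    assert (P2 : forall i, union (mdom S) (mdom T) i -> ~ mdom S i -> mdom T i)
      by (unfold union; tauto).
    set (w := fun j : {i | union (mdom S) (mdom T) i} =>
      match excluded_middle_informative (A (proj1_sig j)) with
      | left a => y (exist _ (proj1_sig j) (P1 _ a (proj2_sig j)))
      | right _ =>
        match excluded_middle_informative (mdom S (proj1_sig j)) with
        | left ks => s (exist _ (proj1_sig j) ks)
        | right nk => t (exist _ (proj1_sig j) (P2 _ (proj2_sig j) nk))
        end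
      end : E (proj1_sig j)).
    assert (G : mgraph (join S T) w).
    { split.
      - replace (restr_fam (subset_unionl (mdom S) (mdom T)) w) with s; [exact Hs|].
        symmetry. apply fam_eq. intros i h. unfold restr_fam, w; simpl.
        destruct (excluded_middle_informative (A i)) as [a|na].
        + assert (Q := f_equal (fun f => f (exist _ i (conj a h))) Hsy).
          unfold restr_fam in Q; simpl in Q. rewrite (fam_pi _ s i h (sK i (conj a h))).
          rewrite Q. apply fam_pi.
        + destruct (excluded_middle_informative (mdom S i)) as [k'|nk].
          * apply fam_pi.
          * contradiction.
      - replace (restr_fam (subset_unionr (mdom S) (mdom T)) w) with t; [exact Ht|].
        symmetry. apply fam_eq. intros i h. unfold restr_fam, w; simpl.
        destruct (excluded_middle_informative (A i)) as [a|na].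
        + assert (Q := f_equal (fun f => f (exist _ i (conj a h))) Hty).
          unfold restr_fam in Q; simpl in Q. rewrite (fam_pi _ t i h (sL i (conj a h))).
          rewrite Q. apply fam_pi.
        + destruct (excluded_middle_informative (mdom S i)) as [k'|nk].
          * exfalso. exact (disj i (conj k' h)).
          * apply fam_pi. }
    set (w' := fun j : {i | U i} => w (exist _ (proj1_sig j) (KLU _ (proj2_sig j)))).
    assert (G' : mgraph (restr R HU) w').
    { apply (proj2 (mrel_eq_graph _ _ e w' w (fun i h1 h2 => fam_pi _ w i _ h2))). exact G. }
    destruct G' as [r [Hr Hrw]]. exists r. split; [exact Hr|].
    apply fam_eq. intros i a.
    assert (Q := f_equal (fun f => f (exist _ i (HA0 i a))) Hrw).
    unfold restr_fam in Q |- *; simpl in Q |- *.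
    rewrite (fam_pi _ r i (HA i a) (HU i (HA0 i a))), Q.
    unfold w', w; simpl.
    destruct (excluded_middle_informative (A i)) as [a'|na]; [|contradiction].
    symmetry. apply Hxy.
Qed.

End Aux.

Theorem mainTheorem2 (I : Type) (E : I -> Type)
  (Hne : forall i, inhabited (E i)) (R : mrel E) :
  integral_connective_structure (@mdom I E R) (@not_scindable_subsets I E R).
Proof.
  split; [split|].
  - intros A [H _]. exact H.
  - intros F HF [x0 [X0 Hx0]].
    assert (HU : subset (fun x => exists A, F A /\ A x) (mdom R)).
    { intros i [A [FA Ai]]. destruct (HF A FA) as [HA _]. exact (HA i Ai). }
    exists HU. intros [S [T [bip e]]].
    pose proof bip as [[k hk] [[l hl] [disj cov]]].
    assert (Uk : exists A, F A /\ A k) by (apply cov; tauto).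
    assert (Ul : exists A, F A /\ A l) by (apply cov; tauto).
    destruct Uk as [Ak [FAk Akk]].
    assert (Ux0 : mdom S x0 \/ mdom T x0) by (apply cov; exists Ak; split; [exact FAk| apply Hx0; exact FAk]).
    destruct Ux0 as [x0S|x0T].
    + destruct Ul as [A [FA Al]]. destruct (HF A FA) as [HA NS].
      apply NS. eapply (key _ _ _ _ _ _ e bip A).
      * intros i a. exists A; split; assumption.
      * exists x0; split; [firstorder|assumption].
      * exists l; split; [firstorder|assumption].
    + destruct (HF Ak FAk) as [HA NS].
      apply NS. eapply (key _ _ _ _ _ _ e bip Ak).
      * intros i a. exists Ak; split; assumption.
      * exists k; split; [firstorder|assumption].
      * exists x0; split; [firstorder|assumption].
  - intros x Xx.
    assert (H : subset (fun y => y = x) (mdom R)) by (intros i ->; exact Xx).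
    exists H. intros [S [T [[[k hk] [[l hl] [disj cov]]] _]]].
    simpl in cov.
    assert (k = x) by (apply cov; auto). assert (l = x) by (apply cov; auto).
    subst. exact (disj x (conj hk hl)).
Qed.
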